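(* Consider an SDE on $\mathbf{R}^d$ with locally Lipschitz coefficients and its maximal flow $(\phi,\tau)$. Let $U_1\subset U_2\subset\cdots$ be bounded open subsets of $\mathbf{R}^d$ with $\bigcup_n U_n=\mathbf{R}^d$. For a compact set $K\subset\mathbf{R}^d$ set $\tau^K_n:=\inf\{t>0:\phi_t(K)\not\subseteq U_n\}$ (with $\tau_0^K:=0$) and $\tau^K:=\inf_{x\in K}\tau(x)$. (i) Suppose there are nonnegative sequences $(a_n),(b_n)$ with $\sum_n a_n=\infty$ and $\sum_n b_n<\infty$ such that for all $n$, $$\mathbf P\{\tau^K_n-\tau^K_{n-1}\le a_n,\ \tau^K_{n-1}<\infty\}\le b_n.$$ Then $\tau^K=\infty$ almost surely. If this holds for every compact $K$, the SDE is strongly complete. (ii) Conversely, let $(a_n),(b_n)$ be nonnegative summable sequences and let $T_1,T_2,\dots$ be finite random times with $\tau^K\le\sum_j T_j$. If $\mathbf P\{T_n\ge a_n\}\le b_n$ for all $n$, then $\tau^K<\infty$ almost surely.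
   Context: Let $(\Omega,\mathcal F,\mathbf P)$ be a probability space. For an SDE on $\mathbf{R}^d$ with locally Lipschitz coefficients driven by independent Brownian motions, a maximal flow is a pair $(\phi,\tau)$ with $\tau:\mathbf{R}^d\times\Omega\to(0,\infty]$ and $\phi_t(x,\omega)$ defined for $t<\tau(x,\omega)$, such that for each $x$, $\phi_\cdot(x)$ solves the SDE from $x$ on $[0,\tau(x))$; $(t,x)\mapsto\phi_t(x,\omega)$ is continuous on $\{t<\tau(x,\omega)\}$; and $\limsup_{t\to\tau(x,\omega)}|\phi_t(x,\omega)|=\infty$ on $\{\tau(x)<\infty\}$. The SDE is strongly complete if there is a set $\Omega_0$ of full probability with $\tau(x,\omega)=\infty$ for all $x$ and all $\omega\in\Omega_0$. *)

(* Defs.v *)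
From HB Require Import structures.
From mathcomp Require Import all_boot all_order all_algebra.
From mathcomp Require Import all_classical all_reals all_analysis.
Set Implicit Arguments. Unset Strict Implicit. Unset Printing Implicit Defensive.
Import Order.TTheory GRing.Theory Num.Theory.
Import numFieldNormedType.Exports.
Local Open Scope classical_set_scope.
Local Open Scope ring_scope.

Section Defs.
Variables (R : realType) (d : nat) (d0 : measure_display) (Omega : measurableType d0).
Local Notation V := 'rV[R]_d.

(* Properties of a maximal flow (phi, tau) that do not refer to the SDE:
   phi t x w is meaningful only for 0 <= t < tau x w. *)
Definition flow_properties (phi : R -> V -> Omega -> V) (tau : V -> Omega -> \bar R) :=
  forall w : Omega,
    (forall x, (0 < tau x w)%E) /\
    (forall x, phi 0 x w = x) /\
    {within [set p : R * V | 0 <= p.1 /\ (p.1%:E < tau p.2 w)%E],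
       continuous (fun p : R * V => phi p.1 p.2 w)} /\
    (forall x, (tau x w < +oo)%E ->
       forall (M e : R), 0 < e -> exists t : R,
         [/\ 0 <= t, fine (tau x w) - e < t, (t%:E < tau x w)%E & M < `|phi t x w|]).

Definition exhaustion (U : nat -> set V) :=
  (forall n, (0 < n)%N -> [/\ open (U n), bounded_set (U n) & U n `<=` U n.+1]) /\
  \bigcup_(n in [set n : nat | (0 < n)%N]) U n = setT.

Definition tauK (tau : V -> Omega -> \bar R) (K : set V) (w : Omega) : \bar R :=
  ereal_inf ((fun x => tau x w) @` K).

(* tau^K_n := inf {t > 0 : phi_t(K) not contained in U_n} (t ranging where
   phi_t(K) is defined, i.e. t < tau^K; inf of the empty set is +oo);
   tau^K_0 := 0. *)
Definition exitK (phi : R -> V -> Omega -> V) (tau : V -> Omega -> \bar R)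
    (U : nat -> set V) (K : set V) (n : nat) (w : Omega) : \bar R :=
  if n is 0 then 0%E else
  ereal_inf [set t%:E | t in [set t : R |
     0 < t /\ (t%:E < tauK tau K w)%E /\ exists2 x, K x & ~ U n (phi t x w)]].

Definition strongly_complete (P : probability Omega R) (tau : V -> Omega -> \bar R) :=
  exists Omega0 : set Omega, [/\ measurable Omega0, P Omega0 = 1%E &
     forall x w, Omega0 w -> tau x w = +oo%E].

(* Hypothesis of part (i) for the compact K.  "P{A} <= b" is read as an
   outer-probability bound: A is contained in a measurable set of probability <= b
   (equivalent to P A <= b when A is measurable). *)
Definition hyp_i (P : probability Omega R) (phi : R -> V -> Omega -> V)
    (tau : V -> Omega -> \bar R) (U : nat -> set V) (K : set V) :=
  exists a b : nat -> R,
    [/\ (forall n, 0 <= a n), (forall n, 0 <= b n),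
        (\sum_(1 <= n <oo) (a n)%:E = +oo)%E,
        (\sum_(1 <= n <oo) (b n)%:E < +oo)%E &
        forall n, (0 < n)%N -> exists E : set Omega,
          [/\ measurable E,
              [set w | (exitK phi tau U K n w - exitK phi tau U K n.-1 w <= (a n)%:E)%E
                       /\ (exitK phi tau U K n.-1 w < +oo)%E] `<=` E &
              (P E <= (b n)%:E)%E]].

End Defs.

(* Main.v *)
Require Import Defs.
From HB Require Import structures.
From mathcomp Require Import all_boot all_order all_algebra.
From mathcomp Require Import all_classical all_reals all_analysis.
Import Order.TTheory GRing.Theory Num.Theory.
Import numFieldNormedType.Exports.
Local Open Scope classical_set_scope.
Local Open Scope ring_scope.
Set Implicit Arguments. Unset Strict Implicit. Unset Printing Implicit Defensive.


Lemma BC d0 (Omega : measurableType d0) (R : realType) (P : probability Omega R)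
  (E : nat -> set Omega) :
  (forall n, measurable (E n)) -> (\sum_(0 <= n <oo) P (E n) < +oo)%E ->
  P.-negligible [set w | forall N, exists2 n, (N <= n)%N & E n w].
Proof.
move=> mE Pfin.
pose A := \bigcap_N \bigcup_(n in [set n | (N <= n)%N]) E n.
have mA : measurable A.
  by apply: bigcapT_measurable => N; apply: bigcup_measurable => n _; exact: mE.
exists A; split => //; last first.
  by move=> w Hw N _; have [n Nn Enw] := Hw N; exists n.
apply/eqP; rewrite eq_le measure_ge0 andbT.
have tl := nneseries_tail_cvg Pfin (fun k _ => measure_ge0 P (E k)).
rewrite -(cvg_lim _ tl) //; apply: lime_ge; first by apply/cvg_ex; eexists; exact: tl.
near=> N; apply: measure_sigma_subadditive_tail => //.
move=> w /(_ N I) [n /= Nn Enw]; exists n => //=.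
by apply/negP; rewrite -leqNgt.
Unshelve. all: by end_near. Qed.
Lemma part2 d0 (Omega : measurableType d0) (R : realType) (P : probability Omega R)
  (tK : Omega -> \bar R) (a b : nat -> R) (T : nat -> Omega -> R) :
     (forall n, 0 <= a n) -> (forall n, 0 <= b n) ->
     (\sum_(1 <= n <oo) (a n)%:E < +oo)%E ->
     (\sum_(1 <= n <oo) (b n)%:E < +oo)%E ->
     (forall n, (0 < n)%N -> measurable_fun setT (T n)) ->
     (forall n w, (0 < n)%N -> 0 <= T n w) ->
     (forall w, (tK w <= \sum_(1 <= j <oo) (T j w)%:E)%E) ->
     (forall n, (0 < n)%N -> (P [set w | (a n <= T n w)%R] <= (b n)%:E)%E) ->
     {ae P, forall w, (tK w < +oo)%E}.
Proof.
move=> a0 b0 sa sb mT T0 tKT PT.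
pose E n := if n is 0 then set0 else [set w | (a n <= T n w)%R].
have mE : forall n, measurable (E n).
  case=> [|n] //=.
  have := mT n.+1 isT measurableT `[a n.+1, +oo[%classic (measurable_itv _).
  rewrite setTI; congr measurable; apply/seteqP; split => w /=;
    by rewrite in_itv /= andbT.
have PE : (\sum_(0 <= n <oo) P (E n) < +oo)%E.
  apply: (le_lt_trans (lee_nneseries (v := fun n => (b n)%:E) _ _)).
  - by move=> i _ _; exact: measure_ge0.
  - case=> [|n] _ /=; first by rewrite measure0 lee_fin.
    exact: PT.
  rewrite nneseries_recl //; last by move=> k _; rewrite lee_fin.
  by apply: lte_add_pinfty => //; exact: ltry.
apply: negligibleS (BC mE PE) => w /= Hw; apply: contrapT => HN; apply: Hw.
have [N HN'] : exists N, forall n, (N < n)%N -> ~ E n w.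
  apply: contrapT => /forallNP H; apply: HN => N.
  have /existsNP [n /not_implyP [Nn /contrapT Enw]] := H N.
  by exists n => //; exact: ltnW.
pose g j := if (j <= N)%N then T j w else 0.
apply: (le_lt_trans (tKT w)).
apply: (le_lt_trans (lee_nneseries (v := fun j => (a j)%:E + (g j)%:E) _ _)).
- by move=> i i1 _; rewrite lee_fin T0.
- move=> n _; rewrite /g; case: ifPn => nN.
    by rewrite -EFinD lee_fin lerDr.
  rewrite adde0 lee_fin; apply/ltW; rewrite ltNge; apply/negP => anT.
  apply: (HN' n); first by rewrite ltnNge.
  by case: n nN anT => //.
rewrite nneseriesD; last 2 first.
- by move=> i _ _; rewrite lee_fin.
- by move=> i i1 _; rewrite lee_fin /g; case: ifPn => // _; exact: T0.
apply: lte_add_pinfty => //.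
rewrite (nneseries_split 1 N); last first.
  by move=> k k1; rewrite lee_fin /g; case: ifPn => // _; exact: T0.
rewrite eseries0; last by move=> i Ni _; rewrite /g leqNgt (leq_trans _ Ni) //= add1n.
by rewrite adde0 sumEFin ltry.
Qed.
Lemma exit_exists (R : realType) (d : nat) (d0 : measure_display)
  (Omega : measurableType d0)
  (phi : R -> 'rV[R]_d -> Omega -> 'rV[R]_d) (tau : 'rV[R]_d -> Omega -> \bar R)
  (U : nat -> set 'rV[R]_d) (K : set 'rV[R]_d) (w : Omega) (n : nat) :
  flow_properties phi tau -> exhaustion U -> compact K -> (0 < n)%N ->
  (tauK tau K w < +oo)%E ->
  exists t x, [/\ 0 < t, (t%:E < tauK tau K w)%E, K x & ~ U n (phi t x w)].
Proof.
move=> fl ex cK n0 tKfin.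
have [tpos [phi0 [cont blow]]] := fl w.
have tK0 : (0 <= tauK tau K w)%E.
  by apply: le_ereal_inf_tmp => _ [x Kx <-]; exact/ltW/tpos.
set s := fine (tauK tau K w).
have tKs : tauK tau K w = s%:E by rewrite fineK // ge0_fin_numE.
have s0 : 0 <= s by rewrite -lee_fin -tKs.
apply: contrapT => Hno.
have Hin : forall t x, 0 < t -> t < s -> K x -> U n (phi t x w).
  move=> t x t0 ts Kx; apply: contrapT => nU; apply: Hno.
  by exists t, x; split => //; rewrite tKs lte_fin.
have [_ bU _] := ex.1 n n0.
have [MU [_ HMU]] := bU.
have [MK [_ HMK]] := compact_bounded cK.
pose B0 := Num.max (MU + 1) (MK + 1).
have hB : forall t x, 0 <= t -> t < s -> K x -> `|phi t x w| <= B0.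
  move=> t x t0 ts Kx; rewrite le_max; apply/orP.
  have [->|tpos'] := eqVneq t 0.
    by right; rewrite phi0; apply: (HMK (MK + 1)) => //; rewrite ltrDl.
  left; apply: (HMU (MU + 1)); first by rewrite ltrDl.
  by apply: Hin => //; rewrite lt_neqAle eq_sym tpos' t0.
have taux : forall x, K x -> (s%:E <= tau x w)%E.
  by move=> x Kx; rewrite -tKs; apply: ereal_inf_lbound; exists x.
have stepA : forall x, K x -> (s%:E < tau x w)%E.
  move=> x Kx; rewrite lt_neqAle taux // andbT; apply/negP => /eqP eqs.
  have [t [t0 _ ttau Bt]] := blow x (ltac:(by rewrite -eqs ltry)) B0 1 ltr01.
  move: Bt; apply/negP; rewrite -leNgt; apply: hB => //.
  by rewrite -lte_fin eqs.
pose D := [set p : R * 'rV[R]_d | 0 <= p.1 /\ (p.1%:E < tau p.2 w)%E].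
pose g := fun p : R * 'rV[R]_d => phi p.1 p.2 w.
have stepB : forall x, K x -> exists2 del, 0 < del &
    forall y, K y -> ball x del y -> ((s + del)%:E <= tau y w)%E.
  move=> x Kx.
  have Dsx : D (s, x) by split => //; exact: stepA.
  move/subspace_continuousP: cont => /(_ _ Dsx (ball (g (s, x)) 1)).
  move=> /(_ (nbhsx_ballx (g (s, x)) 1 ltr01)).
  rewrite /= /within /= => /nbhs_ballP [e /= e0 He].
  exists e => // y Ky xy.
  rewrite leNgt; apply/negP => tyl.
  have tyfin : (tau y w < +oo)%E by apply: (lt_trans tyl); exact: ltry.
  have [t [t0 _ ttau Bt]] := blow y tyfin (Num.max B0 (`|g (s, x)| + 1)) 1 ltr01.
  have [ts|st] := ltP t s.
    by move: Bt; apply/negP; rewrite -leNgt le_max hB.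
  have tse : t < s + e by rewrite -lte_fin (lt_trans ttau).
  have bt : ball (s, x) e (t, y).
    split => //=.
    by rewrite /ball /= distrC ger0_norm ?subr_ge0 // ltrBlDl.
  have := He (t, y) bt (conj t0 ttau).
  rewrite -ball_normE /= => hlt.
  move: Bt; apply/negP; rewrite -leNgt le_max; apply/orP; right.
  have -> : phi t y w = g (s, x) - (g (s, x) - phi t y w).
    by rewrite opprB addrC subrK.
  by rewrite (le_trans (ler_normB _ _)) // lerD2l; exact: ltW.
have Hcov : \forall eta \near 0^'+, K `<=` (fun y => ((s + eta)%:E <= tau y w)%E).
  apply: ((near_covering_withinP K).2 ((compact_near_coveringP K).1 cK)) => x Kx.
  have [del del0 Hd] := stepB x Kx.
  exists (ball x del, [set eta | eta <= del]); first split => /=.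
  - exact: nbhsx_ballx.
  - exact: nbhs_right_le.
  move=> [y eta] [/= xy heta] Ky.
  by apply: le_trans (Hd y Ky xy); rewrite lee_fin lerD2l.
have [eta [/= eta0 Heta]] := filter_ex (filterI (nbhs_right_gt 0) Hcov).
have : ((s + eta)%:E <= tauK tau K w)%E.
  by apply: le_ereal_inf_tmp => _ [x Kx <-]; exact: Heta.
by rewrite tKs lee_fin gerDl leNgt eta0.
Qed.
Lemma part1 (R : realType) (d : nat) (d0 : measure_display)
  (Omega : measurableType d0) (P : probability Omega R)
  (phi : R -> 'rV[R]_d -> Omega -> 'rV[R]_d) (tau : 'rV[R]_d -> Omega -> \bar R)
  (U : nat -> set 'rV[R]_d) (K : set 'rV[R]_d) :
  flow_properties phi tau -> exhaustion U -> compact K -> hyp_i P phi tau U K ->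
  {ae P, forall w, tauK tau K w = +oo%E}.
Proof.
move=> fl ex cK [a [b [a0 b0 sa sb hE]]].
have /choice [E HE] : forall n, exists E : set Omega, (0 < n)%N ->
    [/\ measurable E,
        [set w | (exitK phi tau U K n w - exitK phi tau U K n.-1 w <= (a n)%:E)%E
                 /\ (exitK phi tau U K n.-1 w < +oo)%E] `<=` E &
        (P E <= (b n)%:E)%E].
  move=> n; case: (posnP n) => [->|n0]; first by exists set0.
  by have [E HE] := hE n n0; exists E.
pose E' n := if n is 0 then set0 else E n.
have mE : forall n, measurable (E' n).
  by case=> [|n] //=; have [] := HE n.+1 isT.
have PE : (\sum_(0 <= n <oo) P (E' n) < +oo)%E.
  apply: (le_lt_trans (lee_nneseries (v := fun n => (b n)%:E) _ _)).
  - by move=> i _ _; exact: measure_ge0.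
  - case=> [|n] _ /=; first by rewrite measure0 lee_fin.
    by have [] := HE n.+1 isT.
  rewrite nneseries_recl //; last by move=> k _; rewrite lee_fin.
  by apply: lte_add_pinfty => //; exact: ltry.
apply: negligibleS (BC mE PE) => w /= Hw; apply: contrapT => HN; apply: Hw.
have [N HN'] : exists N, forall n, (N < n)%N -> ~ E' n w.
  apply: contrapT => /forallNP H; apply: HN => N.
  have /existsNP [n /not_implyP [Nn /contrapT Enw]] := H N.
  by exists n => //; exact: ltnW.
apply: contrapT => tKn.
have tKfin : (tauK tau K w < +oo)%E by rewrite ltey; apply/eqP.
have [tpos _] := fl w.
have tK0 : (0 <= tauK tau K w)%E.
  by apply: le_ereal_inf_tmp => _ [x Kx <-]; exact/ltW/tpos.
set s := fine (tauK tau K w).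
have tKs : tauK tau K w = s%:E by rewrite fineK // ge0_fin_numE.
have s0 : 0 <= s by rewrite -lee_fin -tKs.
have exb : forall m, (0 <= exitK phi tau U K m w)%E /\ (exitK phi tau U K m w <= s%:E)%E.
  case=> [|m]; first by rewrite /= lexx lee_fin.
  have [t [x [t0 ttK Kx nU]]] := exit_exists fl ex cK (isT : (0 < m.+1)%N) tKfin.
  split.
    by apply: le_ereal_inf_tmp => _ [t' [t'0 _] <-]; rewrite lee_fin ltW.
  rewrite -tKs; apply/ltW/(le_lt_trans _ ttK).
  by apply: ereal_inf_lbound; exists t => //; split => //; split => //; exists x.
pose f m := fine (exitK phi tau U K m w).
have fE : forall m, exitK phi tau U K m w = (f m)%:E.
  move=> m; have [h1 h2] := exb m; rewrite /f fineK // ge0_fin_numE //.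
  exact: le_lt_trans h2 (ltry _).
have f0 : forall m, 0 <= f m by move=> m; have [] := exb m; rewrite fE lee_fin.
have fs : forall m, f m <= s by move=> m; have [] := exb m; rewrite fE lee_fin.
have key : forall n, (N < n)%N -> a n < f n - f n.-1.
  move=> n Nn; rewrite ltNge; apply/negP => hle.
  apply: (HN' n Nn); rewrite /E'; case: n Nn hle => // n Nn hle.
  have [_ sub _] := HE n.+1 isT; apply: sub; split.
    by rewrite !fE -EFinD lee_fin.
  by rewrite fE ltry.
have tele : forall j, \sum_(N.+1 <= k < N.+1 + j) a k <= f (N + j)%N - f N.
  elim=> [|j IH]; first by rewrite !addn0 big_geq // subrr.
  rewrite addnS big_nat_recr /= ?leq_addr //.
  have := key (N.+1 + j) (leq_trans (ltnSn N) (leq_addr _ _)).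
  rewrite addSn /= addnS => kk.
  have := lerD IH (ltW kk); rewrite addSn => h; apply: (le_trans h).
  by rewrite addrC addrA subrK.
have tail : (\sum_(N.+1 <= k <oo) (a k)%:E <= s%:E)%E.
  apply: lime_le; first by apply: is_cvg_nneseries => n _ _; rewrite lee_fin.
  near=> M.
  have HM : (N.+1 <= M)%N by near: M; exists N.+1.
  rewrite -(subnKC HM) sumEFin lee_fin (le_trans (tele _)) //.
  by have := fs (N + (M - N.+1))%N; have := f0 N; move=> ? ?; rewrite lerBlDr ler_wpDr.
move: sa; rewrite (nneseries_split 1 N); last by move=> k _; rewrite lee_fin.
rewrite add1n sumEFin => sa.
have : (((\sum_(1 <= i < N.+1) a i)%:E + \sum_(N.+1 <= k <oo) (a k)%:E) < +oo)%E.
  by apply: lte_add_pinfty; [exact: ltry | exact: le_lt_trans tail (ltry _)].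
by rewrite sa.
Unshelve. all: by end_near. Qed.

Unset Implicit Arguments.
Theorem mainTheorem3 (R : realType) (d : nat) (d0 : measure_display)
  (Omega : measurableType d0) (P : probability Omega R)
  (phi : R -> 'rV[R]_d -> Omega -> 'rV[R]_d) (tau : 'rV[R]_d -> Omega -> \bar R)
  (U : nat -> set 'rV[R]_d) :
  flow_properties phi tau -> exhaustion U ->
  (* (i) *)
  (forall K : set 'rV[R]_d, compact K -> hyp_i P phi tau U K ->
     {ae P, forall w, tauK tau K w = +oo%E}) /\
  ((forall K : set 'rV[R]_d, compact K -> hyp_i P phi tau U K) ->
     strongly_complete P tau) /\
  (* (ii) *)
  (forall (K : set 'rV[R]_d), compact K ->
   forall (a b : nat -> R) (T : nat -> Omega -> R),
     (forall n, 0 <= a n) -> (forall n, 0 <= b n) ->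
     (\sum_(1 <= n <oo) (a n)%:E < +oo)%E ->
     (\sum_(1 <= n <oo) (b n)%:E < +oo)%E ->
     (forall n, (0 < n)%N -> measurable_fun setT (T n)) ->
     (forall n w, (0 < n)%N -> 0 <= T n w) ->
     (forall w, (tauK tau K w <= \sum_(1 <= j <oo) (T j w)%:E)%E) ->
     (forall n, (0 < n)%N -> (P [set w | (a n <= T n w)%R] <= (b n)%:E)%E) ->
     {ae P, forall w, (tauK tau K w < +oo)%E}).
Proof.
move=> fl ex; split; first by move=> K cK h; exact: part1 fl ex cK h.
split; last first.
  move=> K cK a b T a0 b0 sa sb mT T0 tKT PT.
  exact: (part2 a0 b0 sa sb mT T0 tKT PT).
move=> hall.
pose Km (m : nat) := closed_ball_ Num.norm (0 : 'rV[R]_d) m%:R.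
have cKm : forall m, compact (Km m).
  move=> m; apply: bounded_closed_compact; last exact: closed_closed_ball_.
  exists m%:R; split; first exact: num_real.
  move=> M hM y; rewrite /Km /closed_ball_ /= sub0r normrN => hy.
  exact: le_trans hy (ltW hM).
have := @ae_foralln _ _ _ P (fun m w => tauK tau (Km m) w = +oo%E)
  (fun m => part1 fl ex (cKm m) (hall _ (cKm m))).
move=> [N0 [mN0 PN0 sub]].
exists (~` N0); split.
- exact: measurableC.
- by rewrite probability_setC // PN0 sube0.
move=> x w Nw.
have Hw : forall m, tauK tau (Km m) w = +oo%E.
  by apply: contrapT => h; apply: Nw; apply: sub.
pose m := (Num.truncn `|x|).+1.
have Kx : Km m x by rewrite /Km /closed_ball_ /= sub0r normrN; exact/ltW/truncnS_gt.
apply/eqP; rewrite -leye_eq -(Hw m); apply: ereal_inf_lbound; by exists x.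
Qed.
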